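(* For every integer $n\ge 3$ with $n\equiv 2\pmod 4$, $\gamma_t(C_n\times C_4)\le\gamma_p(C_n\times C_4)\le n+2$.
   Context: All graphs are finite, simple and undirected. $C_n$ denotes the cycle of order $n$ and $G\times H$ the Cartesian product of graphs. For a graph $G$ without isolated vertices: a set $D\subseteq V(G)$ is a total dominating set if every vertex of $G$ (including those in $D$) has a neighbour in $D$; $\gamma_t(G)$ is the minimum size of a total dominating set. A set $D\subseteq V(G)$ is a paired dominating set if every vertex outside $D$ has a neighbour in $D$ and the induced subgraph $G[D]$ has a perfect matching; $\gamma_p(G)$ is the minimum size of a paired dominating set. *)

(* Defs.v *)
(* Simple graphs are symmetric irreflexive relations on a finType. *)
From mathcomp Require Import all_boot.
Set Implicit Arguments. Unset Strict Implicit. Unset Printing Implicit Defensive.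

Definition cycle_rel (n : nat) : rel 'I_n :=
  fun i j => (val j == (val i).+1 %% n) || (val i == (val j).+1 %% n).

Arguments cycle_rel n : clear implicits.

Definition cart_rel (T1 T2 : finType) (e1 : rel T1) (e2 : rel T2) : rel (T1 * T2) :=
  fun u v => ((u.1 == v.1) && e2 u.2 v.2) || ((u.2 == v.2) && e1 u.1 v.1).

Definition total_dominating (T : finType) (e : rel T) (D : {set T}) : bool :=
  [forall v, [exists u in D, e v u]].

Definition perfect_matching_of (T : finType) (e : rel T) (D : {set T})
    (M : {set {set T}}) : bool :=
  [&& [forall m in M, [exists x, [exists y,
          [&& x != y, e x y & m == [set x; y]]]]],
      trivIset M & cover M == D].

Definition paired_dominating (T : finType) (e : rel T) (D : {set T}) : bool :=
  [forall v, (v \notin D) ==> [exists u in D, e v u]] &&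
  [exists M : {set {set T}}, perfect_matching_of e D M].

(* Minimum sizes (meaningful when such sets exist, e.g. no isolated vertices). *)
Definition gamma_t (T : finType) (e : rel T) : nat :=
  \big[minn/#|T|]_(D : {set T} | total_dominating e D) #|D|.

Definition gamma_p (T : finType) (e : rel T) : nat :=
  \big[minn/#|T|]_(D : {set T} | paired_dominating e D) #|D|.

(* Main.v *)
Require Import Defs.
From mathcomp Require Import all_boot.
From mathcomp Require Import zify.
Set Implicit Arguments. Unset Strict Implicit. Unset Printing Implicit Defensive.

Lemma bigmin_le (T : eqType) (r : seq T) (P : pred T) (F : T -> nat) k x :
  x \in r -> P x -> \big[minn/k]_(y <- r | P y) F y <= F x.
Proof.
elim: r => // a r IH; rewrite inE big_cons => /orP [/eqP -> | xr] Px.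
  by rewrite Px geq_minl.
case: (P a); last exact: IH.
by rewrite (leq_trans (geq_minr _ _)) // IH.
Qed.

Lemma gamma_le_card (T : finType) (P : pred {set T}) (D : {set T}) :
  P D -> \big[minn/#|T|]_(E : {set T} | P E) #|E| <= #|D|.
Proof. by move=> PD; apply: bigmin_le => //; exact: mem_index_enum. Qed.

Lemma gamma_ub (T : finType) (P : pred {set T}) :
  \big[minn/#|T|]_(E : {set T} | P E) #|E| <= #|T|.
Proof.
apply: (big_ind (fun x => x <= #|T|)) => //; last by move=> *; exact: max_card.
by move=> x y hx _; rewrite (leq_trans (geq_minl _ _)).
Qed.

Lemma pd_td (T : finType) (e : rel T) (D : {set T}) :
  symmetric e -> paired_dominating e D -> total_dominating e D.
Proof.
move=> esym /andP [/forallP dom /existsP [M /and3P [/forallP Mok _ /eqP cov]]].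
apply/forallP => v; case: (boolP (v \in D)) => vD; last exact: (implyP (dom v) vD).
move: vD; rewrite -cov => /bigcupP [m mM vm].
have /existsP [x /existsP [y /and3P [_ exy /eqP mxy]]] := implyP (Mok m) mM.
have xD : x \in D by rewrite -cov; apply/bigcupP; exists m => //; rewrite mxy !inE eqxx.
have yD : y \in D by rewrite -cov; apply/bigcupP; exists m => //; rewrite mxy !inE eqxx orbT.
move: vm; rewrite mxy !inE => /orP [/eqP -> | /eqP ->]; apply/existsP.
  by exists y; rewrite cov yD.
by exists x; rewrite cov xD esym.
Qed.

Lemma cycle_sym n : symmetric (cycle_rel n).
Proof. by move=> i j; rewrite /cycle_rel orbC. Qed.

Lemma cart_sym (T1 T2 : finType) (e1 : rel T1) (e2 : rel T2) :
  symmetric e1 -> symmetric e2 -> symmetric (cart_rel e1 e2).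
Proof. by move=> s1 s2 u v; rewrite /cart_rel (eq_sym u.1) (eq_sym u.2) s1 s2. Qed.

Definition c0 : 'I_4 := @Ordinal 4 0 isT.
Definition c1 : 'I_4 := @Ordinal 4 1 isT.
Definition c2 : 'I_4 := @Ordinal 4 2 isT.
Definition c3 : 'I_4 := @Ordinal 4 3 isT.
Definition topc n (i : 'I_n) : bool := (val i == n.-1) || (val i %% 4 == 2).
Definition Pc n (i : 'I_n) : bool := ~~ odd i || (val i == n.-1).
Definition inD n (x : 'I_n * 'I_4) : bool :=
  Pc x.1 && (if topc x.1 then 2 <= x.2 else x.2 < 2).
Definition Dset n : {set 'I_n * 'I_4} := [set x | inD x].
Definition pairset n (i : 'I_n) : {set 'I_n * 'I_4} :=
  if topc i then [set (i, c2); (i, c3)] else [set (i, c0); (i, c1)].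
Definition Mset n : {set {set 'I_n * 'I_4}} := (@pairset n) @: [set i | @Pc n i].

Lemma mem_pairset n (i : 'I_n) (x : 'I_n * 'I_4) :
  (x \in pairset i) = (x.1 == i) && (if topc i then 2 <= x.2 else x.2 < 2).
Proof.
case: x => a [[|[|[|[|b]]]] hb] //; rewrite /pairset; case: (topc i);
  rewrite !inE !xpair_eqE -?[Ordinal hb == _]val_eqE /= ?andbF ?andbT ?orbF //.
Qed.

Lemma even_of_mod m : m %% 2 = 0 -> ~~ odd m.
Proof. by rewrite modn2; case: (odd m). Qed.

Lemma dom_D n : 3 <= n -> n %% 4 = 2 -> forall v : 'I_n * 'I_4,
  v \notin Dset n -> [exists u in Dset n, cart_rel (cycle_rel n) (cycle_rel 4) v u].
Proof.
move=> h3 h4 [i j]; rewrite inE /inD /= => vD.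
have [Pi|nPi] := boolP (Pc i).
- move: vD; rewrite Pi /=.
  case: j => [[|[|[|[|j]]]] hj] //=; case ti: (topc i) => //= _; apply/existsP.
  + by exists (i, c3); rewrite inE /inD /= Pi ti /cart_rel /= eqxx.
  + by exists (i, c2); rewrite inE /inD /= Pi ti /cart_rel /= eqxx.
  + by exists (i, c1); rewrite inE /inD /= Pi ti /cart_rel /= eqxx.
  + by exists (i, c0); rewrite inE /inD /= Pi ti /cart_rel /= eqxx.
move: nPi; rewrite /Pc negb_or negbK => /andP [oi ni].
have ni' : nat_of_ord i <> n.-1 by apply/eqP.
have hm := modn2 i; rewrite oi /= in hm.
have ltin := ltn_ord i.
have Hlo : i.-1 < n by lia.
have Hhi : i.+1 < n by lia.
set a := Ordinal Hlo; set b := Ordinal Hhi.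
have Pa : Pc a by rewrite /Pc /= (@even_of_mod i.-1) //; lia.
have Pb : Pc b by rewrite /Pc /= (@even_of_mod i.+1) //; lia.
have ta : topc a = (i.-1 %% 4 == 2).
  by rewrite /topc /=; have -> : (i.-1 == n.-1) = false by apply/eqP; lia.
have tb : topc b = (i.+1 %% 4 == 2).
  by rewrite /topc /=; have -> : (i.+1 == n.-1) = false by apply/eqP; lia.
have eab : (i.-1 %% 4 == 2) = ~~ (i.+1 %% 4 == 2).
  by case: eqP => h1; case: eqP => h2 //=; exfalso; lia.
have ea : cart_rel (cycle_rel n) (cycle_rel 4) (i, j) (a, j).
  apply/orP; right; rewrite eqxx /= /cycle_rel /=; apply/orP; right; apply/eqP.
  by rewrite prednK ?modn_small //; lia.
have eb : cart_rel (cycle_rel n) (cycle_rel 4) (i, j) (b, j).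
  apply/orP; right; rewrite eqxx /= /cycle_rel /=; apply/orP; left; apply/eqP.
  by rewrite /= modn_small.
apply/existsP; case: (leqP 2 j) => hj; case ta' : (i.-1 %% 4 == 2).
- by exists (a, j); rewrite ea inE /inD /= Pa ta ta' hj.
- by exists (b, j); rewrite eb inE /inD /= Pb tb -[_ == 2]negbK -eab ta' hj.
- by exists (b, j); rewrite eb inE /inD /= Pb tb -[_ == 2]negbK -eab ta' hj.
- by exists (a, j); rewrite ea inE /inD /= Pa ta ta' hj.
Qed.

Lemma pm_D n : perfect_matching_of (cart_rel (cycle_rel n) (cycle_rel 4)) (Dset n) (Mset n).
Proof.
apply/and3P; split.
- apply/forallP => m; apply/implyP => /imsetP [i _ ->].
  rewrite /pairset; case: (topc i).
  + apply/existsP; exists (i, c2); apply/existsP; exists (i, c3).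
    by rewrite /cart_rel /= !eqxx xpair_eqE eqxx -val_eqE.
  + apply/existsP; exists (i, c0); apply/existsP; exists (i, c1).
    by rewrite /cart_rel /= !eqxx xpair_eqE eqxx -val_eqE.
- apply/trivIsetP => A B /imsetP [i _ ->] /imsetP [k _ ->] neq.
  rewrite -setI_eq0; apply/negPn/set0Pn => -[x]; rewrite inE !mem_pairset => /andP [/andP [/eqP h1 _] /andP [/eqP h2 _]].
  by move: neq; rewrite -h1 -h2 eqxx.
- apply/eqP/setP => x; rewrite inE; apply/bigcupP/idP.
  + move=> [B /imsetP [i Pi ->]]; rewrite mem_pairset => /andP [/eqP h1 h].
    by rewrite /inD h1 h andbT; move: Pi; rewrite inE.
  + move=> /andP [Pi h]; exists (pairset x.1).
      by apply/imsetP; exists x.1; rewrite ?inE.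
    by rewrite mem_pairset eqxx.
Qed.

Lemma pd_D n : 3 <= n -> n %% 4 = 2 ->
  paired_dominating (cart_rel (cycle_rel n) (cycle_rel 4)) (Dset n).
Proof.
move=> h3 h4; apply/andP; split.
  by apply/forallP => v; apply/implyP; exact: dom_D.
by apply/existsP; exists (Mset n); exact: pm_D.
Qed.

Lemma sum_even m : \sum_(i < m) ~~ odd i = m.+1 %/ 2.
Proof.
elim: m => [|m IH]; first by rewrite big_ord0.
rewrite big_ord_recr /= IH; have := modn2 m.
by case: (odd m) => /= h; lia.
Qed.

Lemma card_D n : 3 <= n -> n %% 4 = 2 -> #|Dset n| = n + 2.
Proof.
move=> h3 h4; rewrite -sum1_card big_mkcond /=.
have -> : \sum_(x : 'I_n * 'I_4) (if x \in Dset n then 1 else 0) =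
  \sum_(i : 'I_n) \sum_(j : 'I_4) (if (i, j) \in Dset n then 1 else 0).
  by rewrite pair_bigA; apply: eq_bigr => -[].
rewrite (eq_bigr (fun i : 'I_n => 2 * (~~ odd i + (val i == n.-1)))); last first.
  move=> i _; transitivity (2 * Pc i).
    by rewrite !big_ord_recl big_ord0 !inE /inD /=; case: (Pc i); case: (topc i).
  congr (2 * _); rewrite /Pc; case: eqP => h //=; rewrite ?addn0 ?orbF //.
  have := modn2 i; case: (odd i) => //= hh.
  have h' : nat_of_ord i = n.-1 := h; lia.
rewrite -(big_distrr 2) /= big_split /= sum_even.
case: n h3 h4 => // n h3 h4.
rewrite big_ord_recr /= eqxx big1 /=; first by lia.
by move=> i _; rewrite ltn_eqF.
Qed.

Theorem lemma4p2 (n : nat) (hn : 3 <= n) (hmod : n %% 4 = 2) :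
  gamma_t (cart_rel (cycle_rel n) (cycle_rel 4)) <=
    gamma_p (cart_rel (cycle_rel n) (cycle_rel 4)) <= n + 2.
Proof.
have Gsym := cart_sym (@cycle_sym n) (@cycle_sym 4).
apply/andP; split.
  rewrite /gamma_p; apply: (big_ind (fun x => gamma_t _ <= x)).
  - exact: gamma_ub.
  - by move=> x y hx hy; rewrite leq_min hx hy.
  - by move=> D pD; apply: gamma_le_card; exact: pd_td.
by rewrite -(card_D hn hmod); apply: gamma_le_card; exact: pd_D.
Qed.
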